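(* Let $\pi$ be a permutation-invariant probability density on $\mathbb{X}^n$ and $q$ a probability density on $\mathbb{X}$. Consider Stage 1 of the SOMA sampler: from the current state $x\in\mathbb{X}^n$, draw $y\sim q$, select an index $I\in\{1,\dots,n\}$ with $\mathbb{P}(I=i)=w_i(y,x)/W(y,x)$, and propose $x'=[x_{-I},y]$. Denote the density of this proposal by $K^{\mathrm{SOMA}}(x'\mid x)$. For $x,x'\in\mathbb{X}^n$ let $d(x,x')=\min_{\sigma\in S_n}\|x_\sigma-x'\|_0$, where $x_\sigma=(x_{\sigma(1)},\dots,x_{\sigma(n)})$ and $\|\cdot\|_0$ counts nonzero entries (i.e. the number of differing components). Then $K^{\mathrm{SOMA}}(x'\mid x)=0$ whenever $d(x,x')>1$; and when $d(x,x')=1$ with $x$ and $x'$ differing only in the $i$-th entry, $x'_i=y$ and $x'_j=x_j$ for $j\neq i$, one has $K^{\mathrm{SOMA}}(x'\mid x)=q(y)\,w_i(y,x)/W(y,x)$. Moreover, combining this proposal with acceptance probability $\alpha_i^{\mathrm{SOMA}}(y,x)=\min\{1,\,W(y,x)/(W(y,x)+w_0(y,x)-w_i(y,x))\}$ (Stage 2) yields a Markov transition kernel $P_{\mathrm{SOMA}}$ that is reversible with respect to $\pi$.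
   Context: $\mathbb{X}$ is a measurable state space and $n\ge1$. The density $\pi$ on $\mathbb{X}^n$ is permutation invariant: $\pi(x_{\sigma(1)},\dots,x_{\sigma(n)})=\pi(x_1,\dots,x_n)$ for every permutation $\sigma$ of $\{1,\dots,n\}$. For $x\in\mathbb{X}^n$, $y\in\mathbb{X}$ and $i\in\{1,\dots,n\}$, $[x_{-i},y]$ denotes the vector obtained from $x$ by replacing its $i$-th component with $y$. The weights are $w_i(y,x)=\pi([x_{-i},y])/\big(q(y)\prod_{j\ne i}q(x_j)\big)$ for $i=1,\dots,n$, $w_0(y,x)=\pi(x)/\prod_{j=1}^n q(x_j)$, and $W(y,x)=\sum_{i=1}^n w_i(y,x)$ (densities are such that these are well-defined and positive). The SOMA sampler: from $x$, draw $y\sim q$, select $I$ with probability $w_I/W$, and replace $x_I$ by $y$ with probability $\alpha_I^{\mathrm{SOMA}}(y,x)$, otherwise stay at $x$. *)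

(* Defs.v *)
From HB Require Import structures.
From mathcomp Require Import all_boot all_order all_algebra.
From mathcomp Require Import fingroup perm.
From mathcomp Require Import all_classical all_reals all_analysis.
From mathcomp Require Import measurable_realfun.

Set Implicit Arguments.
Unset Strict Implicit.
Unset Printing Implicit Defensive.

Import Order.TTheory GRing.Theory Num.Theory.
Local Open Scope classical_set_scope.
Local Open Scope ring_scope.

(* State space X^n is represented by n.-tuple X, with the product
   sigma-algebra provided by MathComp-Analysis (generated by the tnth
   projections).  Components are indexed by 'I_n = {0,...,n-1}. *)

Section SOMA.
Context {d : measure_display} {X : measurableType d} {R : realType} {n : nat}.

Definition repl (x : n.-tuple X) (i : 'I_n) (y : X) : n.-tuple X :=
  [tuple (if j == i then y else tnth x j) | j < n].

Definition permt (s : 'S_n) (x : n.-tuple X) : n.-tuple X :=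
  [tuple tnth x (s j) | j < n].

Definition soma_dist (x x' : n.-tuple X) : nat :=
  \big[minn/n]_(s : 'S_n) #|[set j : 'I_n | tnth (permt s x) j != tnth x' j]|.

Variables (pi : n.-tuple X -> R) (q : X -> R).

Definition wi (i : 'I_n) (y : X) (x : n.-tuple X) : R :=
  pi (repl x i y) / (q y * \prod_(j < n | j != i) q (tnth x j)).

Definition w0 (y : X) (x : n.-tuple X) : R :=
  pi x / \prod_(j < n) q (tnth x j).

Definition Wsum (y : X) (x : n.-tuple X) : R := \sum_(i < n) wi i y x.

Definition alpha (i : 'I_n) (y : X) (x : n.-tuple X) : R :=
  Num.min 1 (Wsum y x / (Wsum y x + w0 y x - wi i y x)).

Variable mu : {measure set X -> \bar R}.

(* Stage 1 of SOMA, as a distribution: K^SOMA(x, A) = P(x' in A) where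
   y ~ q dmu, I = i w.p. w_i/W, x' = [x_{-I}, y]. *)
Definition Kprop (x : n.-tuple X) (A : set (n.-tuple X)) : \bar R :=
  (\int[mu]_y (q y * \sum_(i < n) (wi i y x / Wsum y x) *
                     \1_A (repl x i y))%:E)%E.

Definition Psoma (x : n.-tuple X) (A : set (n.-tuple X)) : \bar R :=
  (\int[mu]_y (q y * \sum_(i < n) (wi i y x / Wsum y x) *
       (alpha i y x * \1_A (repl x i y) + (1 - alpha i y x) * \1_A x))%:E)%E.

End SOMA.

(* Main.v *)
Require Import Defs.
From HB Require Import structures.
From mathcomp Require Import all_boot all_order all_algebra.
From mathcomp Require Import fingroup perm.
From mathcomp Require Import all_classical all_reals all_analysis.
From mathcomp Require Import measurable_realfun.
From mathcomp Require Import ring lra.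

Import Order.TTheory GRing.Theory Num.Theory.
Import numFieldNormedType.Exports.
Local Open Scope classical_set_scope.
Local Open Scope ring_scope.

Set Implicit Arguments.
Unset Strict Implicit.
Unset Printing Implicit Defensive.

Lemma measurable_inv (R : realType) : measurable_fun [set: R] (@GRing.inv R).
Proof.
have -> : [set: R] = [set 0] `|` ~` [set 0] by rewrite setUv.
apply/measurable_funU => //; first exact: measurableC.
split; first exact: measurable_fun_set1.
apply: open_continuous_measurable_fun.
  by apply: closed_openC; apply: accessible_closed_set1; apply: hausdorff_accessible; exact: Rhausdorff.
move=> x; rewrite inE => /eqP x0; exact: inv_continuous.
Qed.

Section Soma.
Context {d : measure_display} {X : measurableType d} {R : realType} {n : nat}.
Implicit Types (x : n.-tuple X).

Lemma tnth_repl x i y j : tnth (repl x i y) j = if j == i then y else tnth x j.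
Proof. by rewrite /repl tnth_mktuple. Qed.

Lemma repl_same x i : repl x i (tnth x i) = x.
Proof. by apply: eq_from_tnth => j; rewrite tnth_repl; case: eqP => // ->. Qed.

Lemma repl_repl x i y z : repl (repl x i y) i z = repl x i z.
Proof. by apply: eq_from_tnth => j; rewrite !tnth_repl; case: eqP. Qed.

Lemma measurable_repl i :
  measurable_fun [set: n.-tuple X * X] (fun p => repl p.1 i p.2).
Proof.
apply/measurable_fun_tnthP => j /=.
rewrite (_ : _ \o _ = fun p : n.-tuple X * X => if j == i then p.2 else tnth p.1 j); last first.
  by apply/funext => p /=; rewrite tnth_repl.
case: eqP => _; first exact: measurable_snd.
exact: (measurableT_comp (measurable_tnth j) (@measurable_fst _ _ (n.-tuple X) X)).
Qed.

Definition Tsw i (p : n.-tuple X * X) := (repl p.1 i p.2, tnth p.1 i).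

Lemma measurable_Tsw i : measurable_fun setT (Tsw i).
Proof.
apply/measurable_fun_pairP; split; first exact: measurable_repl.
exact: (measurableT_comp (measurable_tnth i) (@measurable_fst _ _ (n.-tuple X) X)).
Qed.

Lemma Tsw_invol i p : Tsw i (Tsw i p) = p.
Proof.
case: p => x y; rewrite /Tsw /= repl_repl repl_same tnth_repl eqxx; done.
Qed.

End Soma.

Definition sfm d (T : measurableType d) (R : realType) (m : {measure set T -> \bar R})
  (h : sigma_finite setT m) : set T -> \bar R := m.
HB.instance Definition _ d (T : measurableType d) (R : realType) (m : {measure set T -> \bar R})
  (h : sigma_finite setT m) := Measure.copy (@sfm d T R m h) m.
HB.instance Definition _ d (T : measurableType d) (R : realType) (m : {measure set T -> \bar R})
  (h : sigma_finite setT m) := @Measure_isSigmaFinite.Build d T R (@sfm d T R m h) h.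

Section Key.
Context {d : measure_display} {X : measurableType d} {R : realType} {n : nat}.

Definition rect (A : 'I_n -> set X) : set (n.-tuple X) :=
  [set x | forall i, A i (tnth x i)].

Lemma measurable_rect A : (forall i, measurable (A i)) -> measurable (rect A).
Proof.
move=> mA; have -> : rect A = \bigcap_(i in [set: 'I_n]) ((fun x : n.-tuple X => tnth x i) @^-1` A i).
  by apply/seteqP; split => x /= h i; [move=> _|]; apply: h.
apply: fin_bigcap_measurable; first exact: finite_finset.
move=> i _; rewrite -[X in measurable X]setTI; exact: measurable_tnth.
Qed.

Definition cylG : set (set (n.-tuple X * X)) :=
  [set C | exists A B, [/\ (forall i, measurable (A i)), measurable B &
                          C = rect A `*` B]].

Let GT := g_sigma_algebraType cylG.

Lemma cylG_fst (A : set (n.-tuple X)) : measurable A ->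
  <<s cylG >> (fst @^-1` A).
Proof.
move: A; apply: smallest_sub.
  split.
  - by rewrite preimage_set0; exact: (@measurable0 _ GT).
  - move=> A hA; have -> : fst @^-1` ([set: n.-tuple X] `\` A) = [set: n.-tuple X * X] `\` fst @^-1` A.
      by apply/seteqP; split => -[x y].
    exact: (@measurableD _ GT).
  - move=> F hF; rewrite preimage_bigcup.
    exact: (@bigcupT_measurable _ GT).
apply: (big_ind (fun K => K `<=` _)).
- exact: sub0set.
- by move=> ? ? ? ?; rewrite subUset.
move=> i _ _ [B mB <-]; rewrite setTI.
apply: sub_sigma_algebra.
exists (fun j => if j == i then B else setT), setT; split => //.
- by move=> j; case: eqP.
- apply/seteqP; split => [[x y]|[x y]] /=.
    by move=> h; split => // j; case: eqP => // ->.
  by move=> [h _]; have := h i; rewrite eqxx.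
Qed.

Lemma measurable_sub_cylG : (@measurable _ (n.-tuple X * X)%type) `<=` <<s cylG >>.
Proof.
apply: smallest_sub; first exact: smallest_sigma_algebra.
rewrite subUset; split.
- by move=> _ [A mA <-]; rewrite setTI; exact: cylG_fst.
- move=> _ [B mB <-]; rewrite setTI; apply: sub_sigma_algebra.
  exists (fun=> setT), B; split => //.
  by apply/seteqP; split => [[x y]|[x y]] //= [].
Qed.


Lemma rect_cover (F : (set X)^nat) : [set: X] = \bigcup_k F k ->
  nondecreasing_seq F -> forall x : n.-tuple X, exists K, forall i, F K (tnth x i).
Proof.
move=> TF ndF x.
have h i : exists k, F k (tnth x i).
  have : [set: X] (tnth x i) by [].
  by rewrite TF => -[k _ Fk]; exists k.
pose k i := projT1 (cid (h i)).
exists (\max_i k i) => i.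
have := projT2 (cid (h i)).
have /subsetPset := ndF _ _ (leq_bigmax (F := k) i).
by apply.
Qed.

Section KeyMeasure.
Local Open Scope ereal_scope.
Variable mu : {measure set X -> \bar R}.
Hypothesis hmu : sigma_finite setT mu.
Variable lam : {measure set (n.-tuple X) -> \bar R}.
Hypothesis hlam : forall A : 'I_n -> set X, (forall i, measurable (A i)) ->
  lam [set x | forall i, A i (tnth x i)] = \prod_(i < n) mu (A i).

Lemma lam_sigma_finite : sigma_finite setT lam.
Proof.
have /sigma_finiteP[F [TF ndF Foo]] := hmu.
exists (fun k => rect (fun _ => F k)).
  apply/seteqP; split => // x _.
  have [K hK] := rect_cover TF ndF x. by exists K.
move=> k; split; first by apply: measurable_rect => i; case: (Foo k).
rewrite /rect (@hlam (fun _ => F k)); last by move=> i; case: (Foo k).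
rewrite -ge0_fin_numE; last by apply: prode_ge0 => i _; exact: measure_ge0.
by apply: prode_fin_num => i _; rewrite ge0_fin_numE; case: (Foo k).
Qed.

Let muS : {sigma_finite_measure set X -> \bar R} := sfm hmu.
Let lamS : {sigma_finite_measure set (n.-tuple X) -> \bar R} := sfm lam_sigma_finite.

Let P := (lamS \x muS).

Lemma P_rect A B : (forall i, measurable (A i)) -> measurable B ->
  P (rect A `*` B) = (\prod_(i < n) mu (A i)) * mu B.
Proof.
move=> mA mB; rewrite /P product_measure1E //; last exact: measurable_rect.
by rewrite /= hlam.
Qed.


Lemma rect_setXI A (B : set X) A' (B' : set X) : (rect A `*` B) `&` (rect A' `*` B') =
  rect (fun i => A i `&` A' i) `*` (B `&` B').
Proof.
apply/seteqP; split => -[x y] /=.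
  by move=> [[h1 h2] [h3 h4]]; split => // i; split.
by move=> [h1 [h2 h4]]; split; split => // i; case: (h1 i).
Qed.

Lemma Tsw_preimage i A (B : set X) : Tsw i @^-1` (rect A `*` B) =
  rect (fun j => if j == i then B else A j) `*` A i.
Proof.
apply/seteqP; split => -[x y]; rewrite /Tsw /rect /=.
- move=> [h hB]; split.
    move=> j; case: eqP => [->//|/eqP ji].
    by have := h j; rewrite tnth_repl (negbTE ji).
  by have := h i; rewrite tnth_repl eqxx.
- move=> [h hA]; split => //.
  move=> j; rewrite tnth_repl; case: eqP => [->//|/eqP ji].
  by have := h j; rewrite (negbTE ji).
  by have := h i; rewrite eqxx.
Qed.

Lemma prod_swap (i : 'I_n) (A : 'I_n -> set X) B :
  (\prod_(j < n) mu (if j == i then B else A j)) * mu (A i) =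
  (\prod_(j < n) mu (A j)) * mu B.
Proof.
rewrite (bigD1 i) //= eqxx [in RHS](bigD1 i) //=.
rewrite (eq_bigr (fun j => mu (A j))); last by move=> j /negbTE ->.
rewrite [LHS]muleC [RHS]muleC muleA muleA; congr (_ * _).
by rewrite muleC.
Qed.

Lemma P_Tsw i E : measurable E -> P (Tsw i @^-1` E) = P E.
Proof.
move=> mE.
have mT := @measurable_Tsw _ X n i.
pose PT := measure_function_pushforward__canonical__measure_function_Measure P mT.
have /sigma_finiteP[F [TF ndF Foo]] := hmu.
have mF k : measurable (F k) by case: (Foo k).
have := @g_sigma_algebra_measure_unique _ _ _ cylG _
  (fun k => rect (fun _ => F k) `*` F k) _ _ P PT _ _ _ E.
move=> h; apply/esym; apply: h.
- move=> C [A [B [mA mB ->]]]; apply: measurableX => //; exact: measurable_rect.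
- by move=> k; exists (fun _ => F k), (F k); split.
- apply/seteqP; split => // -[x y] _.
  have [K hK] := rect_cover TF ndF x.
  have : [set: X] y by [].
  rewrite TF => -[k _ Fk].
  exists (maxn K k) => //; split.
    move=> j; have /subsetPset := ndF _ _ (leq_maxl K k); apply; exact: hK.
  by have /subsetPset := ndF _ _ (leq_maxr K k); apply.
- move=> C C' [A [B [mA mB ->]]] [A' [B' [mA' mB' ->]]].
  rewrite rect_setXI; exists (fun i => A i `&` A' i), (B `&` B'); split => //.
  + by move=> j; exact: measurableI.
  + exact: measurableI.
- move=> C [A [B [mA mB ->]]].
  rewrite (_ : PT _ = P (Tsw i @^-1` (rect A `*` B))) // Tsw_preimage.
  rewrite [RHS]P_rect //; last by move=> j; case: eqP.
  by rewrite prod_swap; exact: P_rect.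
- move=> k.
  rewrite [X in X < _](_ : _ = (\prod_(j < n) mu (F k)) * mu (F k)); last exact: P_rect.
  rewrite -ge0_fin_numE; last by apply: mule_ge0; [apply: prode_ge0 => *|]; exact: measure_ge0.
  rewrite fin_numM //; first by apply: prode_fin_num => j _; rewrite ge0_fin_numE; case: (Foo k).
  by rewrite ge0_fin_numE; case: (Foo k).
- exact: measurable_sub_cylG.
Qed.


Lemma fubini_lam (H : n.-tuple X * X -> \bar R) :
  measurable_fun setT H -> (forall p, 0 <= H p) ->
  \int[lam]_x \int[mu]_y H (x, y) = \int[P]_z H z.
Proof.
move=> mH H0; apply/esym.
exact: (@fubini_tonelli1 _ _ _ _ _ lamS muS H mH H0).
Qed.

Lemma key_swap i (H : n.-tuple X * X -> \bar R) :
  measurable_fun setT H -> (forall p, 0 <= H p) ->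
  \int[lam]_x \int[mu]_y H (x, y) = \int[lam]_x \int[mu]_y H (Tsw i (x, y)).
Proof.
move=> mH H0.
have mT := @measurable_Tsw _ X n i.
have mHT : measurable_fun setT (H \o Tsw i) by exact: measurableT_comp.
rewrite fubini_lam // (fubini_lam (H := H \o Tsw i)) //.
have := @ge0_integral_pushforward _ _ _ _ R _ mT P setT H measurableT mH (fun p _ => H0 p).
rewrite preimage_setT => <-.
apply: eq_measure_integral => A mA _.
by apply/esym; apply: P_Tsw.
by move=> p; apply: H0.
Qed.

End KeyMeasure.
End Key.

Lemma sym_alg (R : realType) (u v S : R) : 0 < u -> 0 < v -> 0 <= S ->
  v * (u / (u + S) * Num.min 1 ((u + S) / (u + S + v - u))) =
  u * (v / (v + S) * Num.min 1 ((v + S) / (v + S + u - v))).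
Proof.
move=> u0 v0 S0.
have uS : u + S != 0 by rewrite gt_eqF //; lra.
have vS : v + S != 0 by rewrite gt_eqF //; lra.
rewrite (_ : u + S + v - u = v + S); last by ring.
rewrite (_ : v + S + u - v = u + S); last by ring.
have uS0 : 0 < u + S by lra.
have vS0 : 0 < v + S by lra.
have [huv|huv] := leP u v.
- have m1 : Num.min 1 ((u + S) / (v + S)) = (u + S) / (v + S).
    by apply: min_r; rewrite ler_pdivrMr // mul1r; lra.
  have m2 : Num.min 1 ((v + S) / (u + S)) = 1.
    by apply: min_l; rewrite ler_pdivlMr // mul1r; lra.
  by rewrite m1 m2; field; rewrite uS vS.
- have m1 : Num.min 1 ((u + S) / (v + S)) = 1.
    by apply: min_l; rewrite ler_pdivlMr // mul1r; lra.
  have m2 : Num.min 1 ((v + S) / (u + S)) = (v + S) / (u + S).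
    by apply: min_r; rewrite ler_pdivrMr // mul1r; lra.
  by rewrite m1 m2; field; rewrite uS vS.
Qed.

Section SomaAlg.
Context {d : measure_display} {X : measurableType d} {R : realType} {n : nat}.
Variables (pi : n.-tuple X -> R) (q : X -> R).
Hypothesis n0 : (0 < n)%N.
Hypothesis q0 : forall y, 0 < q y.
Hypothesis pi0 : forall x, 0 < pi x.
Hypothesis piS : forall (s : 'S_n) x, pi (permt s x) = pi x.
Implicit Types (x : n.-tuple X) (i j : 'I_n) (y : X).

Definition Dq (x : n.-tuple X) i := \prod_(j < n | j != i) q (tnth x j).

Lemma Dq_gt0 x i : 0 < Dq x i.
Proof. by apply: prodr_gt0 => j _. Qed.

Lemma prodq_split x i : \prod_(j < n) q (tnth x j) = q (tnth x i) * Dq x i.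
Proof. by rewrite (bigD1 i). Qed.

Lemma Dq_repl x i y : Dq (repl x i y) i = Dq x i.
Proof.
by apply: eq_bigr => j /negbTE ji; rewrite tnth_repl ji.
Qed.

Lemma wi_gt0 i y x : 0 < wi pi q i y x.
Proof. by rewrite /wi divr_gt0 // mulr_gt0 //; exact: Dq_gt0. Qed.

Lemma w0_gt0 y x : 0 < w0 pi q y x.
Proof. by rewrite /w0 divr_gt0 //; apply: prodr_gt0. Qed.

Lemma W_split i y x : Wsum pi q y x =
  wi pi q i y x + \sum_(j < n | j != i) wi pi q j y x.
Proof. by rewrite /Wsum (bigD1 i). Qed.

Lemma Srest_ge0 i y x : 0 <= \sum_(j < n | j != i) wi pi q j y x.
Proof. by apply: sumr_ge0 => j _; exact/ltW/wi_gt0. Qed.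

Lemma W_gt0 y x : 0 < Wsum pi q y x.
Proof.
rewrite (W_split (Ordinal n0)).
have := wi_gt0 (Ordinal n0) y x; have := Srest_ge0 (Ordinal n0) y x; lra.
Qed.

Lemma alpha_den_gt0 i y x : 0 < Wsum pi q y x + w0 pi q y x - wi pi q i y x.
Proof.
rewrite (W_split i).
have := w0_gt0 y x; have := Srest_ge0 i y x; lra.
Qed.

Lemma alpha_ge0 i y x : 0 <= alpha pi q i y x.
Proof.
rewrite /alpha le_min ler01 /= divr_ge0 //; last exact/ltW/alpha_den_gt0.
exact/ltW/W_gt0.
Qed.

Lemma alpha_le1 i y x : alpha pi q i y x <= 1.
Proof. by rewrite /alpha ge_min lexx. Qed.

Lemma wi_swap_i x i y : wi pi q i (tnth x i) (repl x i y) = w0 pi q y x.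
Proof.
rewrite /wi /w0 repl_repl repl_same (prodq_split x i); congr (_ / (_ * _)).
exact: Dq_repl.
Qed.

Lemma w0_swap x i y : w0 pi q (tnth x i) (repl x i y) = wi pi q i y x.
Proof.
rewrite /wi /w0 (prodq_split _ i) tnth_repl eqxx; congr (_ / (_ * _)).
exact: Dq_repl.
Qed.

Lemma repl_perm x i j y : j != i ->
  repl (repl x i y) j (tnth x i) = permt (tperm i j) (repl x j y).
Proof.
move=> ji; have ij : i != j by rewrite eq_sym.
apply: eq_from_tnth => k; rewrite /permt tnth_mktuple !tnth_repl.
case: tpermP => [->|->|/eqP ki /eqP kj].
- by rewrite (negbTE ij) !eqxx.
- by rewrite (negbTE ij) !eqxx.
- by rewrite (negbTE ki) (negbTE kj).
Qed.

Lemma wj_swap x i y j : j != i ->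
  wi pi q j (tnth x i) (repl x i y) = wi pi q j y x.
Proof.
move=> ji; rewrite /wi repl_perm // piS; congr (_ / _).
rewrite (bigD1 i) 1?eq_sym //= [in RHS](bigD1 i) 1?eq_sym //= tnth_repl eqxx.
rewrite mulrCA; congr (_ * (_ * _)).
by apply: eq_bigr => k /andP[_ /negbTE ki]; rewrite tnth_repl ki.
Qed.

Lemma W_swap x i y : Wsum pi q (tnth x i) (repl x i y) =
  w0 pi q y x + \sum_(j < n | j != i) wi pi q j y x.
Proof.
rewrite (W_split i) wi_swap_i; congr (_ + _).
by apply: eq_bigr => j ji; rewrite wj_swap.
Qed.

Definition aa i x y := q y * (wi pi q i y x / Wsum pi q y x) * alpha pi q i y x.

Lemma aa_sym i x y :
  pi x * aa i x y = pi (repl x i y) * aa i (repl x i y) (tnth x i).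
Proof.
rewrite /aa /alpha W_swap wi_swap_i w0_swap.
rewrite (W_split i).
set u := wi pi q i y x; set v := w0 pi q y x.
set S := \sum_(j < n | j != i) _.
have hv : pi x = v * (q (tnth x i) * Dq x i).
  by rewrite /v /w0 (prodq_split x i) divfK // gt_eqF // mulr_gt0 // Dq_gt0.
have hu : pi (repl x i y) = u * (q y * Dq x i).
  by rewrite /u /wi divfK // gt_eqF // mulr_gt0 // Dq_gt0.
rewrite hu hv.
have := sym_alg (wi_gt0 i y x) (w0_gt0 y x) (Srest_ge0 i y x).
rewrite -/u -/v -/S => E.
transitivity (q (tnth x i) * Dq x i * q y *
   (v * (u / (u + S) * Num.min 1 ((u + S) / (u + S + v - u))))); first by ring.
rewrite E; ring.
Qed.

End SomaAlg.

Section SomaMeas.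
Context {d : measure_display} {X : measurableType d} {R : realType} {n : nat}.
Variables (pi : n.-tuple X -> R) (q : X -> R).
Hypothesis mq : measurable_fun setT q.
Hypothesis mpi : measurable_fun setT pi.
Implicit Types (x : n.-tuple X) (i j : 'I_n) (y : X).

Let T := (n.-tuple X * X)%type.

Lemma m_fst_tnth j : measurable_fun [set: T] (fun p : T => tnth p.1 j).
Proof. exact: (measurableT_comp (measurable_tnth j) (@measurable_fst _ _ (n.-tuple X) X)). Qed.

Lemma m_q2 : measurable_fun [set: T] (fun p : T => q p.2).
Proof. exact: (measurableT_comp mq (@measurable_snd _ _ (n.-tuple X) X)). Qed.

Lemma m_Dq i : measurable_fun [set: T] (fun p : T => Dq q p.1 i).
Proof.
rewrite /Dq; under eq_fun do rewrite big_mkcond /=.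
apply: measurable_prod => j _; case: (j != i); last exact: measurable_cst.
exact: (measurableT_comp mq (m_fst_tnth j)).
Qed.

Lemma m_prodq : measurable_fun [set: T] (fun p : T => \prod_(j < n) q (tnth p.1 j)).
Proof.
apply: measurable_prod => j _.
exact: (measurableT_comp mq (m_fst_tnth j)).
Qed.

Lemma m_wi i : measurable_fun [set: T] (fun p : T => wi pi q i p.2 p.1).
Proof.
rewrite /wi; apply: measurable_funM.
  exact: (measurableT_comp mpi (measurable_repl i)).
apply: (measurableT_comp (@measurable_inv R)).
by apply: measurable_funM; [exact: m_q2|exact: m_Dq].
Qed.

Lemma m_w0 : measurable_fun [set: T] (fun p : T => w0 pi q p.2 p.1).
Proof.
rewrite /w0; apply: measurable_funM.
  exact: (measurableT_comp mpi (@measurable_fst _ _ (n.-tuple X) X)).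
apply: (measurableT_comp (@measurable_inv R)); exact: m_prodq.
Qed.

Lemma m_W : measurable_fun [set: T] (fun p : T => Wsum pi q p.2 p.1).
Proof. by rewrite /Wsum; apply: measurable_sum => i; exact: m_wi. Qed.

Lemma m_alpha i : measurable_fun [set: T] (fun p : T => alpha pi q i p.2 p.1).
Proof.
rewrite /alpha; apply: measurable_minr; first exact: measurable_cst.
apply: measurable_funM; first exact: m_W.
apply: (measurableT_comp (@measurable_inv R)).
apply: measurable_funB; last exact: m_wi.
apply: measurable_funD; [exact: m_W|exact: m_w0].
Qed.

Lemma m_aa i : measurable_fun [set: T] (fun p : T => aa pi q i p.1 p.2).
Proof.
rewrite /aa; apply: measurable_funM; last exact: m_alpha.
apply: measurable_funM; first exact: m_q2.
apply: measurable_funM; first exact: m_wi.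
apply: (measurableT_comp (@measurable_inv R)); exact: m_W.
Qed.

End SomaMeas.

Lemma ind_ge0 (R : realType) T (A : set T) z : 0 <= (\1_A z : R).
Proof. by rewrite indicE ler0n. Qed.
Lemma ind1 (R : realType) T (A : set T) z : A z -> (\1_A z : R) = 1.
Proof. by move=> h; rewrite indicE mem_set. Qed.
Lemma ind0 (R : realType) T (A : set T) z : ~ A z -> (\1_A z : R) = 0.
Proof. by move=> h; rewrite indicE memNset. Qed.

Lemma bigminn_le (I : eqType) (r : seq I) (F : I -> nat) n0 s0 :
  s0 \in r -> (\big[minn/n0]_(s <- r) F s <= F s0)%N.
Proof.
elim: r => // a r IH; rewrite inE big_cons => /orP[/eqP<-|h].
  exact: geq_minl.
exact: leq_trans (geq_minr _ _) (IH h).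
Qed.

Section Main.
Context {d : measure_display} {X : measurableType d} {R : realType} {n : nat}.
Variable mu : {measure set X -> \bar R}.
Variable lam : {measure set (n.-tuple X) -> \bar R}.
Variables (pi : n.-tuple X -> R) (q : X -> R).
Hypothesis n0 : (0 < n)%N.
Hypothesis hmu : sigma_finite setT mu.
Hypothesis hlam : forall A : 'I_n -> set X, (forall i, measurable (A i)) ->
     lam [set x | forall i, A i (tnth x i)] = (\prod_(i < n) mu (A i))%E.
Hypothesis mq : measurable_fun setT q.
Hypothesis q0 : forall y, 0 < q y.
Hypothesis hq1 : (\int[mu]_y (q y)%:E = 1)%E.
Hypothesis mpi : measurable_fun setT pi.
Hypothesis pi0 : forall x, 0 < pi x.
Hypothesis piS : forall (s : 'S_n) (x : n.-tuple X), pi (permt s x) = pi x.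
Implicit Types (x : n.-tuple X) (i j : 'I_n) (y : X).

Let T := (n.-tuple X * X)%type.

Definition bb x y := q y * \sum_(i < n) (wi pi q i y x / Wsum pi q y x) * (1 - alpha pi q i y x).

Definition psi (A : set (n.-tuple X)) x y :=
  q y * \sum_(i < n) (wi pi q i y x / Wsum pi q y x) *
       (alpha pi q i y x * \1_A (repl x i y) + (1 - alpha pi q i y x) * \1_A x).

Lemma psi_decomp A x y : psi A x y =
  \sum_(i < n) aa pi q i x y * \1_A (repl x i y) + bb x y * \1_A x.
Proof.
rewrite /psi /bb /aa !mulr_sumr big_distrl -big_split /=.
by apply: eq_bigr => i _; ring.
Qed.

Lemma wW_ge0 i y x : 0 <= wi pi q i y x / Wsum pi q y x.
Proof. by rewrite divr_ge0 // ltW //; [exact: (wi_gt0 q0 pi0)|exact: (W_gt0 n0 q0 pi0)]. Qed.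

Lemma aa_ge0 i x y : 0 <= aa pi q i x y.
Proof.
rewrite /aa; apply: mulr_ge0; [apply: mulr_ge0; [exact/ltW|exact: wW_ge0]|exact: (alpha_ge0 n0 q0 pi0)].
Qed.

Lemma bb_ge0 x y : 0 <= bb x y.
Proof.
rewrite /bb; apply: mulr_ge0; first exact/ltW.
apply: sumr_ge0 => i _; apply: mulr_ge0; first exact: wW_ge0.
by rewrite subr_ge0 alpha_le1.
Qed.

Lemma psi_ge0 A x y : 0 <= psi A x y.
Proof.
rewrite psi_decomp; apply: addr_ge0.
  by apply: sumr_ge0 => i _; apply: mulr_ge0; [exact: aa_ge0|exact: ind_ge0].
by apply: mulr_ge0; [exact: bb_ge0|exact: ind_ge0].
Qed.

Lemma m_psi A : measurable A -> measurable_fun [set: T] (fun p : T => psi A p.1 p.2).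
Proof.
move=> mA.
rewrite (_ : (fun p : T => _) = (fun p : T => \sum_(i < n) aa pi q i p.1 p.2 * \1_A (repl p.1 i p.2)
   + bb p.1 p.2 * \1_A p.1)); last by apply/funext => p; rewrite psi_decomp.
apply: measurable_funD.
  apply: measurable_sum => i; apply: measurable_funM; first exact: m_aa.
  exact: (measurableT_comp (measurable_indic (D := setT) (R := R) mA) (measurable_repl i)).
apply: measurable_funM.
  rewrite /bb; apply: measurable_funM; first exact: m_q2.
  apply: measurable_sum => i; apply: measurable_funM.
    apply: measurable_funM; first exact: m_wi.
    apply: (measurableT_comp (@measurable_inv R)); exact: m_W.
  apply: measurable_funB; first exact: measurable_cst.
  exact: m_alpha.
exact: (measurableT_comp (measurable_indic (D := setT) (R := R) mA) (@measurable_fst _ _ (n.-tuple X) X)).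
Qed.


Lemma m_psi_y A x : measurable A -> measurable_fun [set: X] (fun y => (psi A x y)%:E).
Proof.
move=> mA; apply/measurable_EFinP.
exact: (measurable_fun_pair2 x (m_psi mA)).
Qed.

Lemma Psoma_psi x A : Psoma pi q mu x A = (\int[mu]_y (psi A x y)%:E)%E.
Proof. by []. Qed.

Lemma Psoma_set0 x : Psoma pi q mu x set0 = 0%E.
Proof.
rewrite Psoma_psi; apply: integral0_eq => y _.
have -> : psi set0 x y = 0; last by [].
rewrite psi_decomp indic0 /= mulr0 addr0 big1 // => i _; rewrite mulr0 //.
Qed.

Lemma Psoma_ge0 x A : (0 <= Psoma pi q mu x A)%E.
Proof. by rewrite Psoma_psi; apply: integral_ge0 => y _; rewrite lee_fin psi_ge0. Qed.

Lemma Psoma_setT x : Psoma pi q mu x setT = 1%E.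
Proof.
rewrite Psoma_psi -hq1; apply: eq_integral => y _; congr EFin.
rewrite /psi indicT /=.
rewrite (_ : \sum_(i < n) _ = 1) ?mulr1 //.
transitivity (\sum_(i < n) wi pi q i y x / Wsum pi q y x).
  by apply: eq_bigr => i _; rewrite !mulr1 addrC subrK mulr1.
rewrite -mulr_suml divff //; rewrite gt_eqF //; exact: (W_gt0 n0 q0 pi0 y x).
Qed.

Lemma ind_bigcup_ev (F : (set (n.-tuple X))^nat) : trivIset setT F ->
  forall z, exists N0, forall N, (N0 <= N)%N ->
    (\1_(\bigcup_k F k) z : R) = \sum_(0 <= k < N) \1_(F k) z.
Proof.
move=> tF z.
case: (pselect (exists k, F k z)) => [[k Fk]|nF].
- exists k.+1 => N kN; rewrite ind1; last by exists k.
  rewrite big_mkord (bigD1 (Ordinal kN)) //= ind1 // big1 ?addr0 // => j /eqP jk.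
  apply: ind0 => Fjz; apply: jk; apply: val_inj => /=.
  by apply: (tF j k I I); exists z.
- exists 0%N => N _; rewrite ind0; last by move=> [k _ Fk]; apply: nF; exists k.
  by rewrite big1 // => j _; rewrite ind0 // => Fj; apply: nF; exists j.
Qed.

Lemma psi_bigcup_ev (F : (set (n.-tuple X))^nat) : trivIset setT F ->
  forall x y, exists N0, forall N, (N0 <= N)%N ->
    psi (\bigcup_k F k) x y = \sum_(0 <= k < N) psi (F k) x y.
Proof.
move=> tF x y.
have h i := ind_bigcup_ev tF (repl x i y).
have [Nx hx] := ind_bigcup_ev tF x.
pose Ni i := projT1 (cid (h i)).
exists (maxn Nx (\max_i Ni i)) => N hN.
rewrite psi_decomp.
transitivity (\sum_(i < n) aa pi q i x y * \sum_(0 <= k < N) \1_(F k) (repl x i y)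
   + bb x y * \sum_(0 <= k < N) \1_(F k) x).
  congr (_ + _); last by rewrite (hx N) // (leq_trans (leq_maxl _ _) hN).
  apply: eq_bigr => i _; rewrite (projT2 (cid (h i)) N) //.
  exact: (leq_trans (leq_bigmax (F := Ni) i) (leq_trans (leq_maxr _ _) hN)).
under [RHS]eq_bigr do rewrite psi_decomp.
rewrite big_split /= exchange_big /= mulr_sumr; congr (_ + _).
by apply: eq_bigr => i _; rewrite mulr_sumr.
Qed.

Lemma Psoma_sigma_additive x : semi_sigma_additive (Psoma pi q mu x).
Proof.
move=> F mF tF mUF.
rewrite [X in _ --> X](_ : _ = (\sum_(k <oo) Psoma pi q mu x (F k))%E).
  apply/cvg_closeP; split; last by rewrite closeE.
  by apply: is_cvg_nneseries => k _ _; exact: Psoma_ge0.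
rewrite Psoma_psi.
transitivity (\int[mu]_y \sum_(k <oo) (psi (F k) x y)%:E)%E.
  apply: eq_integral => y _; apply/esym/cvg_lim => //.
  have [N0 hN0] := psi_bigcup_ev tF x y.
  apply: cvg_near_cst; exists N0 => // N /= hN.
  by rewrite sumEFin (hN0 N).
rewrite integral_nneseries //.
- by move=> k; exact: m_psi_y.
- by move=> k y _; rewrite lee_fin psi_ge0.
Qed.


Lemma Psoma_meas A : measurable A ->
  measurable_fun [set: n.-tuple X] (fun x => Psoma pi q mu x A).
Proof.
move=> mA.
have := @measurable_fun_fubini_tonelli_F _ _ _ _ R (sfm hmu)
  (fun p : T => (psi A p.1 p.2)%:E).
apply.
- by apply/measurable_EFinP; exact: m_psi.
- by move=> p; rewrite lee_fin psi_ge0.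
Qed.

Definition kdens x (x' : n.-tuple X) : R := \sum_(i < n)
  (if `[< (forall j, j != i -> tnth x' j = tnth x j) /\ tnth x' i != tnth x i >]
   then q (tnth x' i) * wi pi q i (tnth x' i) x / Wsum pi q (tnth x' i) x else 0).

Lemma kd_far x x' : (1 < soma_dist x x')%N -> kdens x x' = 0.
Proof.
move=> h; apply: big1 => i _; case: asboolP => // -[hj hi]; exfalso.
suff : (soma_dist x x' <= 1)%N by rewrite leqNgt h.
apply: (@leq_trans #|[set j | tnth (permt 1 x) j != tnth x' j]|).
  by rewrite /soma_dist; apply: bigminn_le; exact: mem_index_enum.
rewrite -(cards1 i); apply: subset_leq_card; apply/fintype.subsetP => j.
rewrite !inE /= /permt tnth_mktuple perm1 => /eqP neq.
apply: contraT => ji; exfalso; exact: neq (esym (hj j ji)).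
Qed.

Lemma kd_one x x' i : (forall j, j != i -> tnth x' j = tnth x j) ->
  tnth x' i != tnth x i ->
  kdens x x' = q (tnth x' i) * wi pi q i (tnth x' i) x / Wsum pi q (tnth x' i) x.
Proof.
move=> hx hi; rewrite /kdens (bigD1 i) //=.
case: asboolP => [_|[]]; last by split.
rewrite big1 ?addr0 // => j ji.
case: asboolP => // -[_ hj].
by rewrite (hx j ji) eqxx in hj.
Qed.

Lemma Kprop_dens x A : measurable A -> ~ A x ->
  Kprop pi q mu x A =
  (\sum_(i < n) \int[mu]_y (\1_A (repl x i y) * kdens x (repl x i y))%:E)%E.
Proof.
move=> mA nAx; rewrite /Kprop.
transitivity (\int[mu]_y \sum_(i < n)
   (q y * (wi pi q i y x / Wsum pi q y x) * \1_A (repl x i y))%:E)%E.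
  apply: eq_integral => y _; rewrite sumEFin; congr EFin.
  by rewrite mulr_sumr; apply: eq_bigr => i _; rewrite mulrA.
rewrite ge0_integral_sum //; last 2 first.
- move=> i; apply/measurable_EFinP.
  apply: (measurable_fun_pair2 x (f := fun p : T =>
     q p.2 * (wi pi q i p.2 p.1 / Wsum pi q p.2 p.1) * \1_A (repl p.1 i p.2))).
  apply: measurable_funM.
    apply: measurable_funM; first exact: m_q2.
    apply: measurable_funM; first exact: m_wi.
    apply: (measurableT_comp (@measurable_inv R)); exact: m_W.
  exact: (measurableT_comp (measurable_indic (D := setT) (R := R) mA) (measurable_repl i)).
- move=> i y _; rewrite lee_fin; apply: mulr_ge0; last exact: ind_ge0.
  by apply: mulr_ge0; [exact/ltW|exact: wW_ge0].
apply: eq_bigr => i _; apply: eq_integral => y _; congr EFin.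
case: (pselect (A (repl x i y))) => hA; last by rewrite !ind0 // mulr0 mul0r.
rewrite !ind1 // mulr1 mul1r.
have yx : y != tnth x i.
  by apply/eqP => e; apply: nAx; rewrite -(repl_same x i) -e.
rewrite (@kd_one _ _ i); rewrite ?tnth_repl ?eqxx ?mulrA //.
by move=> j ji; rewrite tnth_repl (negbTE ji).
Qed.


Definition Phi i (A B : set (n.-tuple X)) (p : T) : R :=
  \1_A p.1 * pi p.1 * aa pi q i p.1 p.2 * \1_B (repl p.1 i p.2).
Definition Psi (A B : set (n.-tuple X)) (p : T) : R :=
  \1_A p.1 * pi p.1 * bb p.1 p.2 * \1_B p.1.

Lemma Phi_ge0 i A B p : 0 <= Phi i A B p.
Proof.
rewrite /Phi; apply: mulr_ge0; last exact: ind_ge0.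
apply: mulr_ge0; last exact: aa_ge0.
by apply: mulr_ge0; [exact: ind_ge0|exact/ltW].
Qed.

Lemma Psi_ge0 A B p : 0 <= Psi A B p.
Proof.
rewrite /Psi; apply: mulr_ge0; last exact: ind_ge0.
apply: mulr_ge0; last exact: bb_ge0.
by apply: mulr_ge0; [exact: ind_ge0|exact/ltW].
Qed.

Let m_indA (A : set (n.-tuple X)) : measurable A ->
  measurable_fun [set: T] (fun p : T => (\1_A p.1 : R)).
Proof.
move=> mA.
exact: (measurableT_comp (measurable_indic (D := setT) (R := R) mA) (@measurable_fst _ _ (n.-tuple X) X)).
Qed.

Let m_piA : measurable_fun [set: T] (fun p : T => pi p.1).
Proof. exact: (measurableT_comp mpi (@measurable_fst _ _ (n.-tuple X) X)). Qed.

Lemma m_bb : measurable_fun [set: T] (fun p : T => bb p.1 p.2).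
Proof.
rewrite /bb; apply: measurable_funM; first exact: m_q2.
apply: measurable_sum => i; apply: measurable_funM.
  apply: measurable_funM; first exact: m_wi.
  apply: (measurableT_comp (@measurable_inv R)); exact: m_W.
apply: measurable_funB; first exact: measurable_cst.
exact: m_alpha.
Qed.

Lemma m_Phi i A B : measurable A -> measurable B ->
  measurable_fun [set: T] (fun p => (Phi i A B p)%:E).
Proof.
move=> mA mB; apply/measurable_EFinP; rewrite /Phi.
apply: measurable_funM; last first.
  exact: (measurableT_comp (measurable_indic (D := setT) (R := R) mB) (measurable_repl i)).
apply: measurable_funM; last exact: m_aa.
by apply: measurable_funM; [exact: m_indA|exact: m_piA].
Qed.

Lemma m_Psi A B : measurable A -> measurable B ->
  measurable_fun [set: T] (fun p => (Psi A B p)%:E).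
Proof.
move=> mA mB; apply/measurable_EFinP; rewrite /Psi.
apply: measurable_funM; last exact: m_indA.
apply: measurable_funM; last exact: m_bb.
by apply: measurable_funM; [exact: m_indA|exact: m_piA].
Qed.

Lemma m_int_y (f : T -> \bar R) : measurable_fun [set: T] f -> (forall p, 0 <= f p)%E ->
  measurable_fun [set: n.-tuple X] (fun x => \int[mu]_y f (x, y))%E.
Proof.
move=> mf f0.
exact: (@measurable_fun_fubini_tonelli_F _ _ _ _ R (sfm hmu) f mf f0).
Qed.

Lemma rev_decomp A B : measurable A -> measurable B ->
  (\int[lam]_(x in A) ((pi x)%:E * Psoma pi q mu x B) =
   \sum_(i < n) \int[lam]_x \int[mu]_y (Phi i A B (x, y))%:E +
   \int[lam]_x \int[mu]_y (Psi A B (x, y))%:E)%E.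
Proof.
move=> mA mB.
have mPhi i x := measurable_fun_pair2 x (m_Phi i mA mB).
have mPsi x := measurable_fun_pair2 x (m_Psi mA mB).
have Phi0 i x y : (0 <= (Phi i A B (x, y))%:E)%E by rewrite lee_fin Phi_ge0.
have Psi0 x y : (0 <= (Psi A B (x, y))%:E)%E by rewrite lee_fin Psi_ge0.
have mPhiI i : measurable_fun setT (fun x => \int[mu]_y (Phi i A B (x, y))%:E)%E.
  by apply: (m_int_y (f := fun p => (Phi i A B p)%:E)); [exact: m_Phi|move=> p; rewrite lee_fin Phi_ge0].
have mPsiI : measurable_fun setT (fun x => \int[mu]_y (Psi A B (x, y))%:E)%E.
  by apply: (m_int_y (f := fun p => (Psi A B p)%:E)); [exact: m_Psi|move=> p; rewrite lee_fin Psi_ge0].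
have PhiI0 i x : (0 <= \int[mu]_y (Phi i A B (x, y))%:E)%E.
  by apply: integral_ge0 => y _.
have PsiI0 x : (0 <= \int[mu]_y (Psi A B (x, y))%:E)%E.
  by apply: integral_ge0 => y _.
have pw : forall x, ((fun x => (pi x)%:E * Psoma pi q mu x B)%E \_ A) x =
    (\sum_(i < n) \int[mu]_y (Phi i A B (x, y))%:E +
     \int[mu]_y (Psi A B (x, y))%:E)%E.
  move=> x; rewrite patchE; case: ifPn => [xA|xA].
    have Ax : A x by rewrite inE in xA.
    have mpsi := m_psi_y x mB.
    have psi0 : forall y, [set: X] y -> (0 <= (psi B x y)%:E)%E.
      by move=> y _; rewrite lee_fin psi_ge0.
    rewrite Psoma_psi -(ge0_integralZl _ measurableT mpsi psi0); last by rewrite lee_fin ltW.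
    rewrite -ge0_integral_sum //.
    rewrite -ge0_integralD //; last first.
      by apply: emeasurable_sum => i; exact: mPhi.
      by move=> y _; apply: sume_ge0 => i _.
    apply: eq_integral => y _; rewrite sumEFin -EFinD -EFinM; congr EFin.
    rewrite psi_decomp /Phi /Psi /= (@ind1 R _ A x Ax) mulrDr mulr_sumr; congr (_ + _).
      by apply: eq_bigr => i _; ring.
    by ring.
  have nAx : ~ A x by rewrite notin_setE in xA.
  have h1 : forall i, (\int[mu]_y (Phi i A B (x, y))%:E = 0)%E.
    move=> i; apply: integral0_eq => y _.
    by rewrite /Phi /= ind0 // !mul0r.
  have h2 : (\int[mu]_y (Psi A B (x, y))%:E = 0)%E.
    apply: integral0_eq => y _.
    by rewrite /Psi /= ind0 // !mul0r.
  by rewrite h2 big1 ?adde0.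
rewrite integral_mkcond.
transitivity (\int[lam]_x (\sum_(i < n) \int[mu]_y (Phi i A B (x, y))%:E +
     \int[mu]_y (Psi A B (x, y))%:E))%E.
  by apply: eq_integral => x _; exact: pw.
rewrite ge0_integralD //; last first.
  by apply: emeasurable_sum => i; exact: mPhiI.
  by move=> x _; apply: sume_ge0 => i _.
by rewrite ge0_integral_sum.
Qed.

Lemma Phi_swap i A B p : Phi i A B (Tsw i p) = Phi i B A p.
Proof.
case: p => x y; rewrite /Phi /Tsw /= repl_repl repl_same.
rewrite -(mulrA (\1_A _)) -(aa_sym q0 pi0 piS).
ring.
Qed.

Lemma reversible A B : measurable A -> measurable B ->
  (\int[lam]_(x in A) ((pi x)%:E * Psoma pi q mu x B) =
   \int[lam]_(x in B) ((pi x)%:E * Psoma pi q mu x A))%E.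
Proof.
move=> mA mB; rewrite !rev_decomp //; congr (_ + _).
  apply: eq_bigr => i _.
  rewrite (@key_swap _ _ _ _ mu hmu lam hlam i (fun p => (Phi i A B p)%:E)); last 2 first.
  - exact: m_Phi.
  - by move=> p; rewrite lee_fin Phi_ge0.
  apply: eq_integral => x _; apply: eq_integral => y _.
  by rewrite Phi_swap.
apply: eq_integral => x _; apply: eq_integral => y _.
by rewrite /Psi; congr EFin; ring.
Qed.

End Main.

Unset Implicit Arguments.
Set Strict Implicit.

Theorem theorem1 (d : measure_display) (X : measurableType d) (R : realType)
  (n : nat) (mu : {measure set X -> \bar R})
  (lam : {measure set (n.-tuple X) -> \bar R})
  (pi : n.-tuple X -> R) (q : X -> R) :
  (0 < n)%N ->
  sigma_finite setT mu ->
  (* lam is the n-fold product measure mu^n on X^n *)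
  (forall A : 'I_n -> set X, (forall i, measurable (A i)) ->
     lam [set x | forall i, A i (tnth x i)] = (\prod_(i < n) mu (A i))%E) ->
  (* q is a probability density on X w.r.t. mu, positive *)
  measurable_fun setT q -> (forall y, 0 < q y) ->
  (\int[mu]_y (q y)%:E = 1)%E ->
  (* pi is a probability density on X^n w.r.t. mu^n, positive *)
  measurable_fun setT pi -> (forall x, 0 < pi x) ->
  (\int[lam]_x (pi x)%:E = 1)%E ->
  (* pi is permutation invariant *)
  (forall (s : 'S_n) (x : n.-tuple X), pi (permt s x) = pi x) ->
  [/\
   (* Stage 1: density of the proposal K^SOMA(. | x) w.r.t. the reference
      measure sum_i (pushforward of mu by y |-> [x_{-i},y]) *)
   forall x : n.-tuple X, exists k : n.-tuple X -> R,
     [/\ forall x', (1 < soma_dist x x')%N -> k x' = 0,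
         forall (i : 'I_n) (x' : n.-tuple X), soma_dist x x' = 1%N ->
           (forall j, j != i -> tnth x' j = tnth x j) ->
           tnth x' i != tnth x i ->
           k x' = q (tnth x' i) * wi pi q i (tnth x' i) x
                  / Wsum pi q (tnth x' i) x
       & forall A : set (n.-tuple X), measurable A -> ~ A x ->
           Kprop pi q mu x A =
           (\sum_(i < n) \int[mu]_y (\1_A (repl x i y) * k (repl x i y))%:E)%E],
   (* P_SOMA is a Markov transition kernel *)
   forall x : n.-tuple X,
     [/\ Psoma pi q mu x set0 = 0%E,
         (forall A, measurable A -> (0 <= Psoma pi q mu x A)%E),
         semi_sigma_additive (Psoma pi q mu x)
       & Psoma pi q mu x setT = 1%E],
   (forall A : set (n.-tuple X), measurable A ->
      measurable_fun [set: n.-tuple X]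
        (fun x : n.-tuple X => (Psoma pi q mu x A : \bar R)))
  & (* P_SOMA is reversible with respect to pi *)
   forall A B : set (n.-tuple X), measurable A -> measurable B ->
     (\int[lam]_(x in A) ((pi x)%:E * Psoma pi q mu x B) =
      \int[lam]_(x in B) ((pi x)%:E * Psoma pi q mu x A))%E].
Proof.
move=> n0 hmu hlam mq q0 hq1 mpi pi0 hpi1 piS.
split.
- move=> x; exists (kdens pi q x); split.
  + by move=> x' h; apply: kd_far.
  + by move=> i x' _ hx hi; apply: kd_one.
  + by move=> A mA nAx; apply: Kprop_dens.
- move=> x; split.
  + exact: Psoma_set0.
  + by move=> A mA; apply: Psoma_ge0.
  + by apply: Psoma_sigma_additive.
  + by apply: Psoma_setT.
- by move=> A mA; apply: Psoma_meas.
- by move=> A B mA mB; apply: reversible.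
Qed.
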